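(* Let $\nu\ge1$, $d:\mathbb{Z}^\nu\to\mathbb{C}$ bounded, $J=J_0+D$ on $\ell^2(\mathbb{Z}^\nu)$. If $\Im(d(k))\to0$ as $\|k\|_1\to\infty$, then every boundary eigenvalue of $J$ is real.
   Context: $\|k\|_1=\sum_{j=1}^\nu|k_j|$. $J_0$ is the discrete Laplacian on $\ell^2(\mathbb{Z}^\nu)$: $(J_0u)(k)=\sum_{l\in\mathbb{Z}^\nu:\|l\|_1=1}u(k+l)$. $D$ is multiplication by $d$. The numerical range is $\operatorname{Num}(J)=\{\langle Ju,u\rangle:\|u\|=1\}$, and a boundary eigenvalue of $J$ is an eigenvalue of $J$ lying in the topological boundary of $\operatorname{Num}(J)$. *)

(* Defs.v *)
From Stdlib Require Import Reals Lra ZArith List.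
Import ListNotations.
Open Scope R_scope.

Record Cx : Type := mkC { Re : R; Im : R }.
Definition RtoC (x : R) : Cx := mkC x 0.
Definition C0 : Cx := RtoC 0.
Definition Cadd (z w : Cx) : Cx := mkC (Re z + Re w) (Im z + Im w).
Definition Csub (z w : Cx) : Cx := mkC (Re z - Re w) (Im z - Im w).
Definition Cmul (z w : Cx) : Cx :=
  mkC (Re z * Re w - Im z * Im w) (Re z * Im w + Im z * Re w).
Definition Cconj (z : Cx) : Cx := mkC (Re z) (- Im z).
Definition Cnorm (z : Cx) : R := sqrt (Re z * Re z + Im z * Im z).

Definition valid (nu : nat) (k : list Z) : Prop := length k = nu.

Definition norm1 (k : list Z) : Z := fold_right (fun x acc => (Z.abs x + acc)%Z) 0%Z k.

Fixpoint addAt (k : list Z) (i : nat) (s : Z) : list Z :=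
  match k, i with
  | nil, _ => nil
  | x :: k', O => (x + s)%Z :: k'
  | x :: k', S i' => x :: addAt k' i' s
  end.

Definition Csum (f : list Z -> Cx) (F : list (list Z)) : Cx :=
  fold_right (fun k acc => Cadd (f k) acc) C0 F.

Definition HasSumOn (P : list Z -> Prop) (f : list Z -> Cx) (S : Cx) : Prop :=
  forall eps, eps > 0 ->
    exists F0, NoDup F0 /\ Forall P F0 /\
      forall F, NoDup F -> Forall P F -> incl F0 F ->
        Cnorm (Csub (Csum f F) S) < eps.

Definition l2 (nu : nat) (u : list Z -> Cx) : Prop :=
  exists S, HasSumOn (valid nu) (fun k => RtoC (Cnorm (u k) ^ 2)) S.

(* (J0 u)(k) = sum_{||l||_1 = 1} u(k+l) = sum_{i<nu} (u(k+e_i) + u(k-e_i)) *)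
Definition J0 (nu : nat) (u : list Z -> Cx) (k : list Z) : Cx :=
  fold_right (fun i acc => Cadd (Cadd (u (addAt k i 1%Z)) (u (addAt k i (-1)%Z))) acc)
    C0 (seq 0 nu).

Definition Jop (nu : nat) (d : list Z -> Cx) (u : list Z -> Cx) (k : list Z) : Cx :=
  Cadd (J0 nu u k) (Cmul (d k) (u k)).

Definition NumRange (nu : nat) (d : list Z -> Cx) (z : Cx) : Prop :=
  exists u : list Z -> Cx,
    HasSumOn (valid nu) (fun k => RtoC (Cnorm (u k) ^ 2)) (RtoC 1) /\
    HasSumOn (valid nu) (fun k => Cmul (Jop nu d u k) (Cconj (u k))) z.

Definition is_eigenvalue (nu : nat) (d : list Z -> Cx) (lam : Cx) : Prop :=
  exists u : list Z -> Cx,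
    l2 nu u /\ (exists k, valid nu k /\ u k <> C0) /\
    forall k, valid nu k -> Jop nu d u k = Cmul lam (u k).

Definition in_closure (A : Cx -> Prop) (z : Cx) : Prop :=
  forall eps, eps > 0 -> exists w, A w /\ Cnorm (Csub w z) < eps.
Definition in_interior (A : Cx -> Prop) (z : Cx) : Prop :=
  exists eps, eps > 0 /\ forall w, Cnorm (Csub w z) < eps -> A w.
Definition in_boundary (A : Cx -> Prop) (z : Cx) : Prop :=
  in_closure A z /\ ~ in_interior A z.

Definition boundary_eigenvalue (nu : nat) (d : list Z -> Cx) (lam : Cx) : Prop :=
  is_eigenvalue nu d lam /\ in_boundary (NumRange nu d) lam.

(* Main.v *)
Require Import Defs.
From Stdlib Require Import Reals Lra Lia Psatz ZArith List Permutation Classical.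
Import ListNotations.
Open Scope R_scope.

Lemma Cx_eq z w : Re z = Re w -> Im z = Im w -> z = w.
Proof. destruct z, w; simpl; intros; subst; reflexivity. Qed.

Lemma Cnorm_ge0 z : 0 <= Cnorm z.
Proof. apply sqrt_pos. Qed.

Lemma Cnorm_sq z : Cnorm z * Cnorm z = Re z * Re z + Im z * Im z.
Proof. unfold Cnorm. apply sqrt_sqrt. nra. Qed.

Lemma Cnorm_mul z w : Cnorm (Cmul z w) = Cnorm z * Cnorm w.
Proof.
  unfold Cnorm. rewrite <- sqrt_mult by nra. f_equal. simpl. ring.
Qed.

Lemma Cnorm_tri z w : Cnorm (Cadd z w) <= Cnorm z + Cnorm w.
Proof.
  pose proof (Cnorm_sq z) as Hz. pose proof (Cnorm_sq w) as Hw.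
  pose proof (Cnorm_ge0 z). pose proof (Cnorm_ge0 w).
  assert (Hd : Re z * Re w + Im z * Im w <= Cnorm z * Cnorm w).
  { destruct (Rle_dec (Re z * Re w + Im z * Im w) 0). nra.
    apply Rsqr_incr_0_var. unfold Rsqr.
    replace (Cnorm z * Cnorm w * (Cnorm z * Cnorm w)) with
      ((Cnorm z * Cnorm z) * (Cnorm w * Cnorm w)) by ring.
    rewrite Hz, Hw.
    pose proof (pow2_ge_0 (Re z * Im w - Im z * Re w)). nra. nra. }
  unfold Cnorm at 1. rewrite <- (sqrt_Rsqr (Cnorm z + Cnorm w)) by lra.
  apply sqrt_le_1_alt. unfold Rsqr. simpl. nra.
Qed.

Lemma Re_le_Cnorm z : Rabs (Re z) <= Cnorm z.
Proof.
  rewrite <- sqrt_Rsqr_abs. apply sqrt_le_1_alt. unfold Rsqr. nra.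
Qed.
Lemma Im_le_Cnorm z : Rabs (Im z) <= Cnorm z.
Proof.
  rewrite <- sqrt_Rsqr_abs. apply sqrt_le_1_alt. unfold Rsqr. nra.
Qed.

Lemma Cnorm_C0 : Cnorm C0 = 0.
Proof. unfold Cnorm. simpl. replace (0*0+0*0) with 0 by ring. apply sqrt_0. Qed.

Lemma Csum_ext P f g F : (forall k, P k -> f k = g k) -> Forall P F -> Csum f F = Csum g F.
Proof.
  intros H HF. induction HF; simpl; auto. rewrite H, IHHF; auto.
Qed.

Lemma Csum_add f g F : Csum (fun k => Cadd (f k) (g k)) F = Cadd (Csum f F) (Csum g F).
Proof.
  induction F; simpl. apply Cx_eq; simpl; ring.
  rewrite IHF. apply Cx_eq; simpl; ring.
Qed.

Lemma Csum_scale c f F : Csum (fun k => Cmul c (f k)) F = Cmul c (Csum f F).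
Proof.
  induction F; simpl. apply Cx_eq; simpl; ring.
  rewrite IHF. apply Cx_eq; simpl; ring.
Qed.

Lemma Csum_app f A B : Csum f (A ++ B) = Cadd (Csum f A) (Csum f B).
Proof.
  induction A; simpl. apply Cx_eq; simpl; ring.
  rewrite IHA. apply Cx_eq; simpl; ring.
Qed.

Lemma Csum_perm f A B : Permutation A B -> Csum f A = Csum f B.
Proof.
  induction 1; simpl; auto.
  - rewrite IHPermutation; auto.
  - apply Cx_eq; simpl; ring.
  - congruence.
Qed.

Lemma Csum_zero f F : (forall k, In k F -> f k = C0) -> Csum f F = C0.
Proof.
  induction F; simpl; intros H; auto. rewrite H, IHF; auto.
  apply Cx_eq; simpl; ring.
Qed.

Lemma Csum_filter_zero (p : list Z -> bool) f F :
  (forall k, In k F -> p k = false -> f k = C0) -> Csum f F = Csum f (filter p F).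
Proof.
  induction F; simpl; intros H; auto.
  destruct (p a) eqn:E; simpl.
  - rewrite IHF; auto.
  - rewrite H, IHF; auto. apply Cx_eq; simpl; ring.
Qed.

Lemma Csum_filter_split (p : list Z -> bool) f F :
  Csum f F = Cadd (Csum f (filter p F)) (Csum f (filter (fun x => negb (p x)) F)).
Proof.
  induction F; simpl. apply Cx_eq; simpl; ring.
  destruct (p a); simpl; rewrite IHF; apply Cx_eq; simpl; ring.
Qed.

Definition inL (L : list (list Z)) (k : list Z) : bool :=
  if in_dec (list_eq_dec Z.eq_dec) k L then true else false.

Lemma filter_inL_perm L F : NoDup L -> NoDup F -> incl L F ->
  Permutation (filter (inL L) F) L.
Proof.
  intros HL HF Hi. apply NoDup_Permutation.
  apply NoDup_filter; auto. auto.
  intros x. rewrite filter_In. unfold inL.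
  destruct (in_dec (list_eq_dec Z.eq_dec) x L); split; intros H.
  tauto. split; auto. destruct H; discriminate. contradiction.
Qed.

Lemma Csum_support f L F : NoDup L -> NoDup F -> incl L F ->
  (forall k, In k F -> ~ In k L -> f k = C0) -> Csum f F = Csum f L.
Proof.
  intros HL HF Hi H.
  rewrite (Csum_filter_zero (inL L)).
  - apply Csum_perm, filter_inL_perm; auto.
  - intros k Hk Hp. apply H; auto. unfold inL in Hp.
    destruct (in_dec (list_eq_dec Z.eq_dec) k L); auto. discriminate.
Qed.

Lemma Csum_single f L p : NoDup L -> In p L ->
  (forall k, In k L -> k <> p -> f k = C0) -> Csum f L = f p.
Proof.
  intros HL Hp H. rewrite (Csum_support f [p] L); auto.
  - simpl. apply Cx_eq; simpl; ring.
  - constructor. simpl; tauto. constructor.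
  - intros x [<-|[]]; auto.
  - intros k Hk Hn. apply H; auto. intros ->. apply Hn; simpl; auto.
Qed.

Lemma HS_ext P f g S : (forall k, P k -> f k = g k) -> HasSumOn P f S -> HasSumOn P g S.
Proof.
  intros H HS eps He. destruct (HS eps He) as [F0 [H1 [H2 H3]]].
  exists F0; repeat split; auto. intros F HF HP Hi.
  rewrite <- (Csum_ext P f g F); auto.
Qed.

Definition ndp (A : list (list Z)) := nodup (list_eq_dec Z.eq_dec) A.

Lemma ndp_prop P A B : Forall P A -> Forall P B ->
  NoDup (ndp (A ++ B)) /\ Forall P (ndp (A ++ B)) /\ incl A (ndp (A ++ B)) /\ incl B (ndp (A++B)).
Proof.
  intros HA HB. unfold ndp. split. apply NoDup_nodup.
  rewrite Forall_forall in *. split.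
  intros x Hx. apply nodup_In, in_app_or in Hx. destruct Hx; auto.
  split; intros x Hx; apply nodup_In, in_or_app; auto.
Qed.

Lemma HS_add P f g S T : HasSumOn P f S -> HasSumOn P g T ->
  HasSumOn P (fun k => Cadd (f k) (g k)) (Cadd S T).
Proof.
  intros Hf Hg eps He.
  destruct (Hf (eps/2)) as [A [A1 [A2 A3]]]. lra.
  destruct (Hg (eps/2)) as [B [B1 [B2 B3]]]. lra.
  destruct (ndp_prop P A B A2 B2) as [N1 [N2 [N3 N4]]].
  exists (ndp (A ++ B)); repeat split; auto.
  intros F HF HP Hi. rewrite Csum_add.
  replace (Csub (Cadd (Csum f F) (Csum g F)) (Cadd S T)) with
    (Cadd (Csub (Csum f F) S) (Csub (Csum g F) T)) by (apply Cx_eq; simpl; ring).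
  eapply Rle_lt_trans. apply Cnorm_tri.
  assert (Cnorm (Csub (Csum f F) S) < eps/2) by (apply A3; auto; eapply incl_tran; eauto).
  assert (Cnorm (Csub (Csum g F) T) < eps/2) by (apply B3; auto; eapply incl_tran; eauto).
  lra.
Qed.

Lemma HS_scale P f S c : HasSumOn P f S -> HasSumOn P (fun k => Cmul c (f k)) (Cmul c S).
Proof.
  intros Hf eps He. pose proof (Cnorm_ge0 c).
  destruct (Hf (eps / (Cnorm c + 1))) as [A [A1 [A2 A3]]].
  apply Rdiv_lt_0_compat; lra.
  exists A; repeat split; auto. intros F HF HP Hi. rewrite Csum_scale.
  replace (Csub (Cmul c (Csum f F)) (Cmul c S)) with (Cmul c (Csub (Csum f F) S))
    by (apply Cx_eq; simpl; ring).
  rewrite Cnorm_mul. specialize (A3 F HF HP Hi).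
  pose proof (Cnorm_ge0 (Csub (Csum f F) S)).
  apply Rle_lt_trans with ((Cnorm c + 1) * Cnorm (Csub (Csum f F) S)). nra.
  apply Rlt_le_trans with ((Cnorm c + 1) * (eps / (Cnorm c + 1))).
  apply Rmult_lt_compat_l; lra. right. field. lra.
Qed.

Lemma HS_fin P f L : NoDup L -> Forall P L -> (forall k, P k -> ~ In k L -> f k = C0) ->
  HasSumOn P f (Csum f L).
Proof.
  intros HL HP H eps He. exists L; repeat split; auto.
  intros F HF HPF Hi. rewrite (Csum_support f L F); auto.
  - replace (Csub (Csum f L) (Csum f L)) with C0 by (apply Cx_eq; simpl; ring).
    rewrite Cnorm_C0; lra.
  - intros k Hk Hn. apply H; auto. rewrite Forall_forall in HPF; auto.
Qed.

Lemma HS_single P f m : P m -> (forall k, P k -> k <> m -> f k = C0) -> HasSumOn P f (f m).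
Proof.
  intros Hm H. replace (f m) with (Csum f [m]).
  apply HS_fin. constructor. simpl; tauto. constructor. constructor; auto.
  intros k Hk Hn. apply H; auto. intros ->; apply Hn; simpl; auto.
  simpl. apply Cx_eq; simpl; ring.
Qed.

Lemma Csum_RtoC_Im g F : Im (Csum (fun k => RtoC (g k)) F) = 0.
Proof. induction F; simpl; auto. rewrite IHF; ring. Qed.

Lemma Csum_RtoC_nonneg g F : (forall k, 0 <= g k) -> 0 <= Re (Csum (fun k => RtoC (g k)) F).
Proof. intros H. induction F; simpl. lra. specialize (H a). lra. Qed.

Lemma HS_lower P g S L : (forall k, 0 <= g k) -> HasSumOn P (fun k => RtoC (g k)) S ->
  NoDup L -> Forall P L ->
  Im S = 0 /\ Re (Csum (fun k => RtoC (g k)) L) <= Re S.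
Proof.
  intros Hg HS HL HPL.
  assert (Key : forall eps, eps > 0 -> exists F, NoDup F /\ incl L F /\
     Cnorm (Csub (Csum (fun k => RtoC (g k)) F) S) < eps).
  { intros eps He. destruct (HS eps He) as [A [A1 [A2 A3]]].
    destruct (ndp_prop P A L A2 HPL) as [N1 [N2 [N3 N4]]].
    exists (ndp (A ++ L)); repeat split; auto. }
  split.
  - destruct (Req_dec (Im S) 0) as [|Hn]; auto. exfalso.
    destruct (Key (Rabs (Im S))) as [F [_ [_ HF]]]. apply Rabs_pos_lt; auto.
    pose proof (Im_le_Cnorm (Csub (Csum (fun k => RtoC (g k)) F) S)) as H.
    simpl in H. rewrite Csum_RtoC_Im in H.
    replace (0 - Im S) with (- Im S) in H by ring. rewrite Rabs_Ropp in H. lra.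
  - apply Rnot_lt_le. intros Hlt.
    destruct (Key (Re (Csum (fun k => RtoC (g k)) L) - Re S)) as [F [F1 [F2 HF]]]. lra.
    pose proof (Re_le_Cnorm (Csub (Csum (fun k => RtoC (g k)) F) S)) as H.
    simpl in H.
    rewrite (Csum_filter_split (inL L)) in H, HF.
    rewrite (Csum_perm _ _ L (filter_inL_perm L F HL F1 F2)) in H, HF.
    simpl in H.
    pose proof (Csum_RtoC_nonneg g (filter (fun x => negb (inL L x)) F) Hg).
    pose proof (Rle_abs (Re (Csum (fun k => RtoC (g k)) L) +
        Re (Csum (fun k => RtoC (g k)) (filter (fun x => negb (inL L x)) F)) - Re S)).
    lra.
Qed.

Lemma Rdiv_le_0_compat' x y : 0 <= x -> 0 < y -> 0 <= x / y.
Proof. intros. apply Rle_mult_inv_pos; auto. Qed.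


Fixpoint phi (k : list Z) : Z := match k with nil => 0%Z | x :: k' => (x + 2 * phi k')%Z end.

Lemma addAt_length k i s : length (addAt k i s) = length k.
Proof. revert i; induction k; intros [|i]; simpl; auto. Qed.

Lemma addAt_add k i s t : addAt (addAt k i s) i t = addAt k i (s + t).
Proof. revert i; induction k; intros [|i]; simpl; auto. f_equal; lia. f_equal; auto. Qed.

Lemma addAt_0 k i : addAt k i 0 = k.
Proof. revert i; induction k; intros [|i]; simpl; auto. f_equal; lia. f_equal; auto. Qed.

Lemma phi_addAt k i s : (i < length k)%nat -> phi (addAt k i s) = (phi k + s * 2 ^ Z.of_nat i)%Z.
Proof.
  revert i; induction k; intros [|i] H; simpl length in H; try lia.
  - simpl. lia.
  - change (addAt (a :: k) (S i) s) with (a :: addAt k i s).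
  change (phi (a :: addAt k i s)) with (a + 2 * phi (addAt k i s))%Z.
  change (phi (a :: k)) with (a + 2 * phi k)%Z.
  rewrite (IHk i) by lia. rewrite Nat2Z.inj_succ, Z.pow_succ_r by lia. lia.
Qed.

Lemma norm1_cons x k : norm1 (x :: k) = (Z.abs x + norm1 k)%Z.
Proof. reflexivity. Qed.

Lemma norm1_ge0 k : (0 <= norm1 k)%Z.
Proof. induction k; simpl; lia. Qed.

Lemma phi_bound k : (Z.abs (phi k) <= 2 ^ Z.of_nat (length k) * norm1 k)%Z.
Proof.
  induction k. simpl. lia.
  change (phi (a :: k)) with (a + 2 * phi k)%Z. change (length (a :: k)) with (S (length k)).
  rewrite norm1_cons.
  rewrite Nat2Z.inj_succ, Z.pow_succ_r by lia.
  pose proof (norm1_ge0 k).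
  assert (1 <= 2 ^ Z.of_nat (length k))%Z by
    (pose proof (Z.pow_pos_nonneg 2 (Z.of_nat (length k))); lia).
  nia.
Qed.

Lemma exists_max (Q : list Z -> Prop) (f : list Z -> Z) B :
  (exists k, Q k) -> (forall k, Q k -> (f k <= B)%Z) ->
  exists k, Q k /\ forall k', Q k' -> (f k' <= f k)%Z.
Proof.
  intros [k0 H0] HB. apply NNPP. intros Hn.
  assert (Hs : forall k, Q k -> exists k', Q k' /\ (f k' > f k)%Z).
  { intros k Hk. apply NNPP. intros Hn2. apply Hn. exists k. split; auto.
    intros k' Hk'. apply Z.nlt_ge. intros Hl. apply Hn2. exists k'. split; auto; lia. }
  assert (Hi : forall n : nat, exists k, Q k /\ (f k >= f k0 + Z.of_nat n)%Z).
  { induction n. exists k0; split; auto; lia.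
    destruct IHn as [k [Hk Hf]]. destruct (Hs k Hk) as [k' [Hk' Hf']].
    exists k'; split; auto; lia. }
  destruct (Hi (Z.to_nat (B - f k0 + 1))) as [k [Hk Hf]].
  specialize (HB k Hk). lia.
Qed.

Lemma fold_zero (T : nat -> Cx) l a : (forall i, In i l -> T i = C0) ->
  fold_right (fun i acc => Cadd (T i) acc) a l = a.
Proof.
  induction l; simpl; intros H; auto. rewrite IHl, H; auto.
  apply Cx_eq; simpl; ring.
Qed.

Lemma fin_supp_false nu d u lam : (1 <= nu)%nat ->
  (forall k, valid nu k -> Jop nu d u k = Cmul lam (u k)) ->
  (exists k, valid nu k /\ u k <> C0) ->
  (exists N, forall k, valid nu k -> u k <> C0 -> (norm1 k <= N)%Z) -> False.
Proof.
  intros Hnu Hev Hex [N HN].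
  set (Q := fun k => valid nu k /\ u k <> C0).
  destruct (exists_max Q phi (2 ^ Z.of_nat nu * Z.abs N)%Z Hex) as [k [[Hk Huk] Hmax]].
  { intros k [Hv Hu]. pose proof (phi_bound k). specialize (HN k Hv Hu).
    unfold valid in Hv. rewrite Hv in H. pose proof (norm1_ge0 k).
    pose proof (Z.pow_pos_nonneg 2 (Z.of_nat nu)). nia. }
  assert (Hz : forall p, valid nu p -> (phi p > phi k)%Z -> u p = C0).
  { intros p Hp Hg. destruct (classic (u p = C0)); auto.
    specialize (Hmax p (conj Hp H)). lia. }
  destruct nu as [|j]; [lia|].
  set (k' := addAt k j 1).
  assert (Hk'v : valid (S j) k') by (unfold valid, k'; rewrite addAt_length; auto).
  unfold valid in Hk.
  assert (Hpk' : phi k' = (phi k + 2 ^ Z.of_nat j)%Z).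
  { unfold k'. rewrite phi_addAt by lia. lia. }
  assert (Hpow : forall i, (i < j)%nat -> (2 ^ Z.of_nat i < 2 ^ Z.of_nat j)%Z).
  { intros i Hi. apply Z.pow_lt_mono_r; lia. }
  assert (Hpos : forall i, (0 < 2 ^ Z.of_nat i)%Z) by (intros; apply Z.pow_pos_nonneg; lia).
  pose proof (Hev k' Hk'v) as E. unfold Jop, J0 in E.
  rewrite (Hz k') in E by (auto; specialize (Hpos j); lia).
  rewrite seq_S, fold_right_app in E. simpl in E.
  rewrite (Hz (addAt k' j 1)) in E.
  2:{ unfold valid. rewrite addAt_length; auto. }
  2:{ rewrite phi_addAt by (unfold k'; rewrite addAt_length; lia). specialize (Hpos j); lia. }
  assert (Hkk : addAt k' j (-1) = k) by (unfold k'; rewrite addAt_add; apply addAt_0).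
  rewrite Hkk in E.
  rewrite fold_zero in E.
  - apply Huk. destruct (u k) as [a b]. simpl in E.
    injection E; intros. apply Cx_eq; simpl; lra.
  - intros i Hi. apply in_seq in Hi.
    assert (Hi' : (i < length k')%nat) by (unfold k'; rewrite addAt_length; lia).
    rewrite !Hz; try (unfold valid; rewrite addAt_length; auto).
    + apply Cx_eq; simpl; ring.
    + rewrite phi_addAt by auto. specialize (Hpow i ltac:(lia)). lia.
    + rewrite phi_addAt by auto. specialize (Hpos i). lia.
Qed.


Lemma J0_lin nu u v a b k :
  J0 nu (fun x => Cadd (Cmul a (u x)) (Cmul b (v x))) k =
  Cadd (Cmul a (J0 nu u k)) (Cmul b (J0 nu v k)).
Proof.
  unfold J0. induction (seq 0 nu); simpl. apply Cx_eq; simpl; ring.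
  rewrite IHl. apply Cx_eq; simpl; ring.
Qed.

Lemma Jop_lin nu d u v a b k :
  Jop nu d (fun x => Cadd (Cmul a (u x)) (Cmul b (v x))) k =
  Cadd (Cmul a (Jop nu d u k)) (Cmul b (Jop nu d v k)).
Proof.
  unfold Jop. rewrite J0_lin. apply Cx_eq; simpl; ring.
Qed.

Definition delta (m k : list Z) : Cx := if list_eq_dec Z.eq_dec k m then RtoC 1 else C0.
Definition nbrs nu m := flat_map (fun i => [addAt m i 1%Z; addAt m i (-1)%Z]) (seq 0 nu).
Definition Lm nu m := ndp (m :: nbrs nu m).

Lemma delta_ne m k : k <> m -> delta m k = C0.
Proof. unfold delta; destruct (list_eq_dec Z.eq_dec k m); congruence. Qed.
Lemma delta_eq m : delta m m = RtoC 1.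
Proof. unfold delta; destruct (list_eq_dec Z.eq_dec m m); congruence. Qed.

Lemma In_Lm_nbr nu m i s : (i < nu)%nat -> (s = 1 \/ s = -1)%Z -> In (addAt m i s) (Lm nu m).
Proof.
  intros Hi Hs. unfold Lm, ndp. apply nodup_In. right. unfold nbrs.
  apply in_flat_map. exists i. split. apply in_seq; lia.
  destruct Hs; subst; simpl; auto.
Qed.
Lemma In_Lm_m nu m : In m (Lm nu m).
Proof. unfold Lm, ndp. apply nodup_In. left; auto. Qed.
Lemma Lm_NoDup nu m : NoDup (Lm nu m).
Proof. apply NoDup_nodup. Qed.
Lemma Lm_valid nu m : valid nu m -> Forall (valid nu) (Lm nu m).
Proof.
  intros Hm. apply Forall_forall. intros x Hx. unfold Lm, ndp in Hx.
  apply nodup_In in Hx. destruct Hx as [<-|Hx]; auto.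
  unfold nbrs in Hx. apply in_flat_map in Hx. destruct Hx as [i [_ Hx]].
  unfold valid in *. simpl in Hx. destruct Hx as [<-|[<-|[]]]; rewrite addAt_length; auto.
Qed.

Lemma addAt_inv k m i s : addAt k i s = m -> k = addAt m i (-s).
Proof. intros <-. rewrite addAt_add. replace (s + - s)%Z with 0%Z by lia. symmetry; apply addAt_0. Qed.

Lemma Jdelta_out nu d m k : ~ In k (Lm nu m) -> Jop nu d (delta m) k = C0.
Proof.
  intros Hk. unfold Jop, J0.
  rewrite delta_ne by (intros ->; apply Hk, In_Lm_m).
  rewrite fold_zero. apply Cx_eq; simpl; ring.
  intros i Hi. apply in_seq in Hi.
  rewrite !delta_ne. apply Cx_eq; simpl; ring.
  - intros H. apply addAt_inv in H. apply Hk. rewrite H. apply In_Lm_nbr; lia.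
  - intros H. apply addAt_inv in H. apply Hk. rewrite H. apply In_Lm_nbr; lia.
Qed.

Lemma mul_fold2 (a b : nat -> Cx) c l :
  Cmul (fold_right (fun i acc => Cadd (Cadd (a i) (b i)) acc) C0 l) c =
  fold_right (fun i acc => Cadd (Cadd (Cmul (a i) c) (Cmul (b i) c)) acc) C0 l.
Proof.
  induction l; simpl. apply Cx_eq; simpl; ring.
  rewrite <- IHl. apply Cx_eq; simpl; ring.
Qed.

Lemma Csum_fold2 (A B : nat -> list Z -> Cx) l F :
  Csum (fun k => fold_right (fun i acc => Cadd (Cadd (A i k) (B i k)) acc) C0 l) F =
  fold_right (fun i acc => Cadd (Cadd (Csum (A i) F) (Csum (B i) F)) acc) C0 l.
Proof.
  induction l; simpl.
  - apply Csum_zero; auto.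
  - rewrite (Csum_add (fun k => Cadd (A a k) (B a k))
       (fun k => fold_right (fun i acc => Cadd (Cadd (A i k) (B i k)) acc) C0 l)).
    rewrite Csum_add, IHl. reflexivity.
Qed.

Lemma fold_ext (T T' : nat -> Cx) l a : (forall i, In i l -> T i = T' i) ->
  fold_right (fun i acc => Cadd (T i) acc) a l = fold_right (fun i acc => Cadd (T' i) acc) a l.
Proof. induction l; simpl; intros H; auto. rewrite H, IHl; auto. Qed.

Lemma conj_fold (a b : nat -> Cx) l :
  Cconj (fold_right (fun i acc => Cadd (Cadd (a i) (b i)) acc) C0 l) =
  fold_right (fun i acc => Cadd (Cadd (Cconj (b i)) (Cconj (a i))) acc) C0 l.
Proof.
  induction l; simpl. apply Cx_eq; simpl; ring.
  rewrite <- IHl. apply Cx_eq; simpl; ring.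
Qed.

Lemma Csum_shift nu m (c : list Z -> Cx) i s : (i < nu)%nat -> (s = 1 \/ s = -1)%Z ->
  Csum (fun k => Cmul (delta m (addAt k i s)) (c k)) (Lm nu m) = c (addAt m i (-s)).
Proof.
  intros Hi Hs.
  rewrite (Csum_single _ _ (addAt m i (-s))).
  - rewrite addAt_add. replace (- s + s)%Z with 0%Z by lia. rewrite addAt_0, delta_eq.
    apply Cx_eq; simpl; ring.
  - apply Lm_NoDup.
  - apply In_Lm_nbr; lia.
  - intros k _ Hk. rewrite delta_ne. apply Cx_eq; simpl; ring.
    intros H. apply addAt_inv in H. auto.
Qed.

Lemma b_value nu d m (u : list Z -> Cx) :
  Csum (fun k => Cmul (Jop nu d (delta m) k) (Cconj (u k))) (Lm nu m) =
  Cadd (Cconj (J0 nu u m)) (Cmul (d m) (Cconj (u m))).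
Proof.
  rewrite (Csum_ext (fun _ => True) _
    (fun k => Cadd
      (fold_right (fun i acc => Cadd (Cadd (Cmul (delta m (addAt k i 1%Z)) (Cconj (u k)))
                                           (Cmul (delta m (addAt k i (-1)%Z)) (Cconj (u k)))) acc) C0 (seq 0 nu))
      (Cmul (Cmul (d k) (delta m k)) (Cconj (u k))))).
  2:{ intros k _. unfold Jop, J0. rewrite <- mul_fold2. apply Cx_eq; simpl; ring. }
  2:{ apply Forall_forall; auto. }
  rewrite Csum_add.
  rewrite (Csum_fold2 (fun i k => Cmul (delta m (addAt k i 1%Z)) (Cconj (u k)))
                      (fun i k => Cmul (delta m (addAt k i (-1)%Z)) (Cconj (u k)))).
  unfold J0. rewrite conj_fold. f_equal.
  - apply fold_ext. intros i Hi. apply in_seq in Hi.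
    rewrite !Csum_shift by lia. reflexivity.
  - rewrite (Csum_single _ _ m). rewrite delta_eq. apply Cx_eq; simpl; ring.
    apply Lm_NoDup. apply In_Lm_m.
    intros k _ Hk. rewrite delta_ne by auto. apply Cx_eq; simpl; ring.
Qed.


Definition Nval (a b S g : Cx) : Cx :=
  Cadd (Cadd (Cadd (Cmul (Cmul a (Cconj a)) S) (Cmul (Cmul a (Cconj b)) g))
             (Cmul (Cmul b (Cconj a)) (Cconj g))) (Cmul b (Cconj b)).
Definition Qval (a b S lam g bb mu : Cx) : Cx :=
  Cadd (Cadd (Cadd (Cmul (Cmul a (Cconj a)) (Cmul lam S)) (Cmul (Cmul a (Cconj b)) (Cmul lam g)))
             (Cmul (Cmul b (Cconj a)) bb)) (Cmul (Cmul b (Cconj b)) mu).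

Lemma HS_four P (f1 f2 f3 f4 : list Z -> Cx) v1 v2 v3 v4 a b F :
  HasSumOn P f1 v1 -> HasSumOn P f2 v2 -> HasSumOn P f3 v3 -> HasSumOn P f4 v4 ->
  (forall k, P k -> F k = Cadd (Cadd (Cadd (Cmul (Cmul a (Cconj a)) (f1 k)) (Cmul (Cmul a (Cconj b)) (f2 k)))
             (Cmul (Cmul b (Cconj a)) (f3 k))) (Cmul (Cmul b (Cconj b)) (f4 k))) ->
  HasSumOn P F (Cadd (Cadd (Cadd (Cmul (Cmul a (Cconj a)) v1) (Cmul (Cmul a (Cconj b)) v2))
             (Cmul (Cmul b (Cconj a)) v3)) (Cmul (Cmul b (Cconj b)) v4)).
Proof.
  intros H1 H2 H3 H4 HF.
  eapply HS_ext. intros k Hk. symmetry. apply HF; auto.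
  repeat apply HS_add; apply HS_scale; auto.
Qed.

Lemma sums2 nu d u lam m S a b :
  valid nu m ->
  (forall k, valid nu k -> Jop nu d u k = Cmul lam (u k)) ->
  HasSumOn (valid nu) (fun k => RtoC (Cnorm (u k) ^ 2)) S ->
  let x := fun k => Cadd (Cmul a (u k)) (Cmul b (delta m k)) in
  HasSumOn (valid nu) (fun k => RtoC (Cnorm (x k) ^ 2)) (Nval a b S (u m)) /\
  HasSumOn (valid nu) (fun k => Cmul (Jop nu d x k) (Cconj (x k)))
    (Qval a b S lam (u m) (Cadd (Cconj (J0 nu u m)) (Cmul (d m) (Cconj (u m))))
       (Jop nu d (delta m) m)).
Proof.
  intros Hm Hev HS x.
  assert (Huu : HasSumOn (valid nu) (fun k => Cmul (u k) (Cconj (u k))) S).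
  { eapply HS_ext; [|exact HS]. intros k _. apply Cx_eq; simpl;
    rewrite ?Rmult_1_r, ?Cnorm_sq; ring. }
  assert (Hsg : forall f : list Z -> Cx, (forall k, k <> m -> f k = C0) ->
            HasSumOn (valid nu) f (f m)).
  { intros f Hf. apply HS_single; auto. }
  split.
  - unfold Nval.
    replace (u m) with (Cmul (u m) (Cconj (delta m m))) at 1
      by (rewrite delta_eq; apply Cx_eq; simpl; ring).
    replace (Cconj (u m)) with (Cmul (delta m m) (Cconj (u m)))
      by (rewrite delta_eq; apply Cx_eq; simpl; ring).
    replace (Cmul b (Cconj b)) with (Cmul (Cmul b (Cconj b)) (Cmul (delta m m) (Cconj (delta m m))))
      by (rewrite delta_eq; apply Cx_eq; simpl; ring).
    apply HS_four with (f1 := fun k => Cmul (u k) (Cconj (u k)))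
       (f2 := fun k => Cmul (u k) (Cconj (delta m k)))
       (f3 := fun k => Cmul (delta m k) (Cconj (u k)))
       (f4 := fun k => Cmul (delta m k) (Cconj (delta m k))); auto.
    + apply Hsg. intros k Hk. rewrite delta_ne by auto. apply Cx_eq; simpl; ring.
    + apply Hsg. intros k Hk. rewrite delta_ne by auto. apply Cx_eq; simpl; ring.
    + apply Hsg. intros k Hk. rewrite delta_ne by auto. apply Cx_eq; simpl; ring.
    + intros k _. unfold x. apply Cx_eq; simpl; rewrite ?Rmult_1_r, ?Cnorm_sq; simpl; ring.
  - unfold Qval.
    replace (Cmul lam (u m)) with (Cmul (Jop nu d u m) (Cconj (delta m m)))
      by (rewrite delta_eq, Hev by auto; apply Cx_eq; simpl; ring).
    replace (Jop nu d (delta m) m) with (Cmul (Jop nu d (delta m) m) (Cconj (delta m m)))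
      by (rewrite delta_eq; apply Cx_eq; simpl; ring).
    rewrite <- b_value.
    apply HS_four with (f1 := fun k => Cmul (Jop nu d u k) (Cconj (u k)))
       (f2 := fun k => Cmul (Jop nu d u k) (Cconj (delta m k)))
       (f3 := fun k => Cmul (Jop nu d (delta m) k) (Cconj (u k)))
       (f4 := fun k => Cmul (Jop nu d (delta m) k) (Cconj (delta m k))).
    + replace (fun k => Cmul (Jop nu d u k) (Cconj (u k))) with
        (fun k => Cmul (Jop nu d u k) (Cconj (u k))) by reflexivity.
      eapply HS_ext. 2: apply (HS_scale _ _ _ lam Huu).
      intros k Hk. simpl. rewrite Hev by auto. apply Cx_eq; simpl; ring.
    + apply Hsg. intros k Hk. rewrite delta_ne by auto. apply Cx_eq; simpl; ring.
    + apply HS_fin. apply Lm_NoDup. apply Lm_valid; auto.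
      intros k _ Hk. rewrite Jdelta_out by auto. apply Cx_eq; simpl; ring.
    + apply Hsg. intros k Hk. rewrite delta_ne by auto. apply Cx_eq; simpl; ring.
    + intros k _. unfold x. rewrite Jop_lin. apply Cx_eq; simpl; ring.
Qed.


Lemma stageA s gr gi lr li br bi mr mi p qr qi : s <> 0 ->
  let a := mkC (p - (qr * gr + qi * gi) / s) (- (qi * gr - qr * gi) / s) in
  let q := mkC qr qi in
  let rho := 1 - (gr*gr + gi*gi) / s in
  let cr := br - (lr * gr + li * gi) in
  let ci := bi - (li * gr - lr * gi) in
  let er := mr - (br * gr - bi * gi) / s in
  let ei := mi - (br * gi + bi * gr) / s in
  Nval a q (mkC s 0) (mkC gr gi) = RtoC (s * p * p + rho * (qr*qr + qi*qi)) /\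
  Qval a q (mkC s 0) (mkC lr li) (mkC gr gi) (mkC br bi) (mkC mr mi) =
    mkC (lr * s * p * p + p * (qr * cr - qi * ci) + (qr*qr+qi*qi) * er)
        (li * s * p * p + p * (qr * ci + qi * cr) + (qr*qr+qi*qi) * ei).
Proof.
  intros Hs. split; unfold Nval, Qval, RtoC; apply Cx_eq; simpl; field; auto.
Qed.

Lemma attain (S g lam bb mu : Cx) :
  Im S = 0 -> Re S > Re g * Re g + Im g * Im g ->
  (let c := Csub bb (Cmul lam (Cconj g)) in Re c * Re c + Im c * Im c > 0) ->
  exists eps, eps > 0 /\ forall w, Cnorm (Csub w lam) < eps ->
    exists a b, Nval a b S g = RtoC 1 /\ Qval a b S lam g bb mu = w.
Proof.
  destruct S as [s si], g as [gr gi], lam as [lr li], bb as [br bi], mu as [mr mi].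
  simpl. intros -> Hs Hc.
  set (cr := br - (lr * gr - li * - gi)) in Hc.
  set (ci := bi - (lr * - gi + li * gr)) in Hc.
  set (C2 := cr * cr + ci * ci) in Hc.
  assert (Hs0 : s > 0) by nra.
  assert (HC2 : cr * cr + ci * ci > 0) by exact Hc.
  set (rho := 1 - (gr*gr + gi*gi) / s).
  assert (Hrho : rho > 0).
  { unfold rho. apply Rlt_Rminus. apply (Rmult_lt_reg_r s); [lra|].
    unfold Rdiv. rewrite Rmult_assoc, Rinv_l by lra. lra. }
  set (er := mr - (br * gr - bi * gi) / s).
  set (ei := mi - (br * gi + bi * gr) / s).
  set (kr := lr - er / rho). set (ki := li - ei / rho).
  set (K := kr * kr + ki * ki).
  assert (HK : K >= 0) by (unfold K; nra).
  set (t0 := Rmin (1/2) (C2 / (8 * s * rho * (K + 1)))).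
  assert (Ht0p : t0 > 0).
  { unfold t0. apply Rmin_glb_lt. lra. apply Rdiv_lt_0_compat. lra.
    apply Rmult_lt_0_compat; [|lra]. apply Rmult_lt_0_compat; lra. }
  assert (Ht0h : t0 <= 1/2) by apply Rmin_l.
  assert (Ht0c : t0 <= C2 / (8 * s * rho * (K + 1))) by apply Rmin_r.
  set (E2 := C2 * t0 / (8 * s * rho)).
  assert (HE2 : E2 > 0).
  { unfold E2. apply Rdiv_lt_0_compat. nra. apply Rmult_lt_0_compat; [|lra].
    apply Rmult_lt_0_compat; lra. }
  exists (sqrt E2). split. apply sqrt_lt_R0; lra.
  intros [wr wi] Hw.
  set (dr := wr - lr). set (di := wi - li).
  assert (HD : dr * dr + di * di < E2).
  { pose proof (Cnorm_sq (Csub (mkC wr wi) (mkC lr li))) as H1.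
    pose proof (Cnorm_ge0 (Csub (mkC wr wi) (mkC lr li))). simpl in H1.
    pose proof (sqrt_sqrt E2 ltac:(lra)). pose proof (sqrt_pos E2).
    unfold dr, di. nra. }
  set (G := fun t => C2 * t * (1 - t) / s - rho * ((dr + t * kr) * (dr + t * kr) + (di + t * ki) * (di + t * ki))).
  assert (HG0 : G 0 <= 0).
  { unfold G. replace (C2 * 0 * (1 - 0) / s) with 0 by (field; lra). nra. }
  assert (HGt0 : G t0 > 0).
  { unfold G.
    assert (A1 : C2 * t0 * (1 - t0) / s >= C2 * t0 / (2 * s)).
    { assert (C2 * t0 * (1 - t0) / s - C2 * t0 / (2 * s) = (C2 * t0 * (1/2 - t0)) / s)
        by (field; lra).
      assert (0 <= (C2 * t0 * (1/2 - t0)) / s).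
      { apply Rdiv_le_0_compat'; [|lra]. apply Rmult_le_pos; nra. }
      lra. }
    assert (A2 : (dr + t0 * kr) * (dr + t0 * kr) + (di + t0 * ki) * (di + t0 * ki)
                 <= 2 * (dr * dr + di * di) + 2 * (t0 * t0 * K)).
    { unfold K. pose proof (pow2_ge_0 (dr - t0 * kr)). pose proof (pow2_ge_0 (di - t0 * ki)). nra. }
    assert (A3 : 2 * rho * (dr * dr + di * di) < C2 * t0 / (4 * s)).
    { assert (2 * rho * E2 = C2 * t0 / (4 * s)) by (unfold E2; field; lra). nra. }
    assert (A4 : 2 * rho * (t0 * t0 * K) < C2 * t0 / (4 * s)).
    { assert (Hm : t0 * (8 * s * rho * (K + 1)) <= C2).
      { apply (Rmult_le_reg_r (/ (8 * s * rho * (K + 1)))).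
        apply Rinv_0_lt_compat. apply Rmult_lt_0_compat; [|lra]. nra.
        rewrite Rmult_assoc, Rinv_r. rewrite Rmult_1_r. exact Ht0c.
        apply Rgt_not_eq. apply Rmult_lt_0_compat; [|lra]. nra. }
      assert (C2 * t0 / (4 * s) = 2 * rho * t0 * (C2 / (8 * s * rho))) by (field; lra).
      assert (t0 * (K + 1) <= C2 / (8 * s * rho)).
      { apply (Rmult_le_reg_r (8 * s * rho)). nra.
        replace (C2 / (8 * s * rho) * (8 * s * rho)) with C2 by (field; lra). nra. }
      assert (t0 * K < t0 * (K + 1)) by nra.
      assert (2 * rho * t0 * (t0 * K) < 2 * rho * t0 * (C2 / (8 * s * rho))).
      { apply Rmult_lt_compat_l. nra. lra. }
      replace (2 * rho * (t0 * t0 * K)) with (2 * rho * t0 * (t0 * K)) by ring. lra. }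
    assert (A5 : rho * ((dr + t0 * kr) * (dr + t0 * kr) + (di + t0 * ki) * (di + t0 * ki))
      <= rho * (2 * (dr * dr + di * di) + 2 * (t0 * t0 * K))) by (apply Rmult_le_compat_l; lra).
    assert (C2 * t0 / (2 * s) = 2 * (C2 * t0 / (4 * s))) by (field; lra). lra. }
  destruct (IVT_cor G 0 t0) as [t [[Ht1 Ht2] HGt]].
  { intros x. unfold G. reg. }
  lra. nra.
  set (p := sqrt ((1 - t) / s)).
  assert (Hp2 : p * p = (1 - t) / s) by (apply sqrt_sqrt; apply Rdiv_le_0_compat'; lra).
  assert (Hp : p > 0) by (apply sqrt_lt_R0; apply Rdiv_lt_0_compat; lra).
  set (rr := dr + t * kr). set (ri := di + t * ki).
  set (qr := (rr * cr + ri * ci) / (p * C2)).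
  set (qi := (ri * cr - rr * ci) / (p * C2)).
  destruct (stageA s gr gi lr li br bi mr mi p qr qi ltac:(lra)) as [HN HQ].
  eexists; eexists; split; [rewrite HN | rewrite HQ].
  - assert (Hq2 : qr * qr + qi * qi = (rr * rr + ri * ri) / (p * p * C2)).
    { unfold qr, qi, C2. field. split; lra. }
    assert (HGt' : C2 * t * (1 - t) / s = rho * (rr * rr + ri * ri)) by (unfold G in HGt; unfold rr, ri; lra).
    f_equal. change (1 - (gr*gr+gi*gi)/s) with rho.
    rewrite Hq2, (Rmult_assoc s p p), Hp2.
    replace (rho * ((rr * rr + ri * ri) / ((1 - t) / s * C2))) with
      ((rho * (rr * rr + ri * ri)) * s / ((1 - t) * C2)) by (field; repeat split; lra).
    rewrite <- HGt'. field. repeat split; lra.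
  - assert (Hq2 : qr * qr + qi * qi = (rr * rr + ri * ri) / (p * p * C2)).
    { unfold qr, qi, C2. field. split; lra. }
    assert (HGt' : C2 * t * (1 - t) / s = rho * (rr * rr + ri * ri)) by (unfold G in HGt; unfold rr, ri; lra).
    assert (Hq2' : qr * qr + qi * qi = t / rho).
    { rewrite Hq2, Hp2.
      replace ((rr * rr + ri * ri) / ((1 - t) / s * C2)) with
        ((rho * (rr * rr + ri * ri)) * s / ((1 - t) * C2 * rho)) by (field; repeat split; lra).
      rewrite <- HGt'. field. repeat split; lra. }
    assert (E1 : p * (qr * cr - qi * ci) = rr) by (unfold qr, qi, C2; field; split; lra).
    assert (E3 : p * (qr * ci + qi * cr) = ri) by (unfold qr, qi, C2; field; split; lra).
    replace (br - (lr * gr + li * gi)) with cr by (unfold cr; ring).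
    replace (bi - (li * gr - lr * gi)) with ci by (unfold ci; ring).
    change (mr - (br * gr - bi * gi) / s) with er.
    change (mi - (br * gi + bi * gr) / s) with ei.
    rewrite E1, E3, Hq2'. apply Cx_eq; simpl.
    + rewrite Rmult_assoc, Rmult_assoc, <- (Rmult_assoc s p p), (Rmult_assoc s), Hp2.
      unfold rr, dr, kr. field. split; lra.
    + rewrite Rmult_assoc, Rmult_assoc, <- (Rmult_assoc s p p), (Rmult_assoc s), Hp2.
      unfold ri, di, ki. field. split; lra.
Qed.


Theorem mainTheorem7 (nu : nat) (d : list Z -> Cx) :
  (1 <= nu)%nat ->
  (exists M : R, forall k, valid nu k -> Cnorm (d k) <= M) ->
  (forall eps : R, eps > 0 -> exists N : Z,
     forall k, valid nu k -> (norm1 k > N)%Z -> Rabs (Im (d k)) < eps) ->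
  forall lam : Cx, boundary_eigenvalue nu d lam -> Im lam = 0.
Proof.
  intros Hnu _ Himd lam [[u [[S HS] [[k0 [Hk0 Hu0]] Hev]]] [_ Hnint]].
  destruct (Req_dec (Im lam) 0) as [|Hli]; auto. exfalso.
  assert (Hm : exists m, valid nu m /\ u m <> C0 /\ Im (d m) <> Im lam).
  { apply NNPP; intro Hn. destruct (Himd (Rabs (Im lam))) as [N HN].
    apply Rabs_pos_lt; auto.
    apply (fin_supp_false nu d u lam Hnu Hev (ex_intro _ k0 (conj Hk0 Hu0))).
    exists N. intros k Hk Huk. apply Z.nlt_ge. intros Hgt.
    specialize (HN k Hk (Z.lt_gt _ _ Hgt)).
    apply Hn. exists k. repeat split; auto. intros He. rewrite He in HN. lra. }
  destruct Hm as [m [Hmv [Hum Hdm]]].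
  assert (Hk1 : exists k1, valid nu k1 /\ k1 <> m /\ u k1 <> C0).
  { apply NNPP; intro Hn.
    apply (fin_supp_false nu d u lam Hnu Hev (ex_intro _ k0 (conj Hk0 Hu0))).
    exists (norm1 m). intros k Hk Huk.
    destruct (list_eq_dec Z.eq_dec k m) as [->|Hne]. lia.
    exfalso; apply Hn; eauto. }
  destruct Hk1 as [k1 [Hk1v [Hk1m Hk1u]]].
  destruct (HS_lower (valid nu) (fun k => Cnorm (u k) ^ 2) S [m; k1]) as [HIm HRe].
  { intros k. apply pow2_ge_0. }
  { exact HS. }
  { constructor. simpl. intros [H|[]]; auto. constructor. simpl; tauto. constructor. }
  { repeat constructor; auto. }
  simpl in HRe.
  assert (Hpos : forall z, z <> C0 -> Re z * Re z + Im z * Im z > 0).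
  { intros z Hz. destruct (Req_dec (Re z) 0); destruct (Req_dec (Im z) 0); try nra.
    exfalso; apply Hz; apply Cx_eq; simpl; auto. }
  pose proof (Hpos _ Hk1u) as P1. pose proof (Hpos _ Hum) as P2.
  rewrite !Rmult_1_r, !Cnorm_sq in HRe.
  set (bb := Cadd (Cconj (J0 nu u m)) (Cmul (d m) (Cconj (u m)))).
  destruct (attain S (u m) lam bb (Jop nu d (delta m) m)) as [eps [Heps Hatt]]; auto.
  { lra. }
  { simpl. pose proof (Hev m Hmv) as Em. unfold Jop in Em.
    unfold bb. destruct (J0 nu u m) as [jr ji].
    destruct (u m) as [gr gi], (d m) as [dr di], lam as [lr li].
    simpl in *. injection Em; intros E2 E1.
    assert (HR : jr + (dr * gr - di * - gi) - (lr * gr - li * - gi) = 2 * gi * (di - li)) by lra.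
    assert (HI : - ji + (dr * - gi + di * gr) - (lr * - gi + li * gr) = 2 * gr * (di - li)) by lra.
    rewrite HR, HI.
    assert (0 < (di - li) * (di - li)).
    { assert (di - li <> 0) by lra. nra. }
    nra. }
  apply Hnint. exists eps. split; auto. intros w Hw.
  destruct (Hatt w Hw) as [a [b [HN HQ]]].
  destruct (sums2 nu d u lam m S a b Hmv Hev HS) as [H1 H2].
  exists (fun k => Cadd (Cmul a (u k)) (Cmul b (delta m k))).
  rewrite <- HN, <- HQ. split; auto.
Qed.
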